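(* Let $Q$ be a quiver and $C$ a monomial admissible subcoalgebra of $kQ$. If there is a path $p\in C$ of positive length such that $p\beta\notin C$ for every arrow $\beta$ of $Q$ (or such that $\beta p\notin C$ for every arrow $\beta$), then $C$ is not semiprime. In particular, if there is an arrow $\alpha$ such that no arrow $\beta$ satisfies $\beta\alpha\in C$ (or no arrow $\beta$ satisfies $\alpha\beta\in C$), then $C$ is not semiprime. *)

(* Defs.v *)
From HB Require Import structures.
From mathcomp Require Import all_boot all_order all_algebra.
Set Implicit Arguments. Unset Strict Implicit. Unset Printing Implicit Defensive.
Import GRing.Theory.
Local Open Scope ring_scope.

(* A qpath is written left-to-right: (v, [:: a1; ...; an]) starts at v and
   satisfies s a1 = v, t a_i = s a_(i+1).  (v, [::]) is the trivial qpath e_v.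
   The concatenation p q ("p followed by q") is defined when end p = start q. *)
Section Quiver.
Variables (V A : Type) (s t : A -> V).

Definition qpath := (V * seq A)%type.

Fixpoint valid_from (v : V) (l : seq A) : Prop :=
  match l with
  | [::] => True
  | a :: l' => s a = v /\ valid_from (t a) l'
  end.

Definition valid_path (p : qpath) : Prop := valid_from p.1 p.2.

Fixpoint end_from (v : V) (l : seq A) : V :=
  match l with
  | [::] => v
  | a :: l' => end_from (t a) l'
  end.

Definition pstart (p : qpath) : V := p.1.
Definition pend (p : qpath) : V := end_from p.1 p.2.
Definition plength (p : qpath) : nat := size p.2.

Definition path_arrow (p : qpath) (b : A) : qpath := (p.1, rcons p.2 b).
Definition arrow_path (b : A) (p : qpath) : qpath := (s b, b :: p.2).
Definition arrow_as_path (a : A) : qpath := (s a, [:: a]).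

(* A monomial subcoalgebra of kQ is the span of a set S of paths.
   Comultiplication of kQ: Delta(p) = sum_{p = p1 p2} p1 (x) p2.
   The span of S is a subcoalgebra iff Delta(p) lies in C (x) C for each p in S,
   i.e. (the p1 (x) p2 being distinct basis tensors) iff for every splitting
   p = p1 p2 both p1 and p2 belong to S.  It is admissible when it contains
   kQ0 (+) kQ1, i.e. all trivial paths and all arrows. *)
Definition monomial_admissible_subcoalgebra (S : pred qpath) : Prop :=
  [/\ (forall p, S p -> valid_path p),
      (forall v l1 l2, S (v, l1 ++ l2) -> S (v, l1) /\ S (end_from v l1, l2)),
      (forall v, S (v, [::])) &
      (forall a, S (arrow_as_path a))].

Variable k : fieldType.

(* The dual algebra C^* of C = span S: linear forms on C, i.e. functions on the
   basis S, represented as functions qpath -> k vanishing off S, with the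
   convolution product (f * g)(p) = sum_{p = p1 p2} f(p1) g(p2). *)
Definition dual_elt (S : pred qpath) (f : qpath -> k) : Prop :=
  forall p, ~ S p -> f p = 0.

Definition conv (S : pred qpath) (f g : qpath -> k) (p : qpath) : k :=
  if S p then
    \sum_(i < (size p.2).+1)
       f (p.1, take i p.2) * g (end_from p.1 (take i p.2), drop i p.2)
  else 0.

Definition dual_add (f g : qpath -> k) : qpath -> k := fun p => f p + g p.

Definition dual_ideal (S : pred qpath) (I : (qpath -> k) -> Prop) : Prop :=
  [/\ (forall f, I f -> dual_elt S f),
      I (fun _ => 0),
      (forall f g, I f -> I g -> I (dual_add f g)),
      (forall f g, I f -> dual_elt S g -> I (conv S g f)) &
      (forall f g, I f -> dual_elt S g -> I (conv S f g))].

(* C is semiprime iff its dual algebra C^* is a semiprime algebra: C^* has no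
   nonzero ideal I with I^2 = 0 (I^2 = 0 iff all products of elements of I
   vanish). *)
Definition semiprime_coalgebra (S : pred qpath) : Prop :=
  forall I, dual_ideal S I ->
    (forall f g, I f -> I g -> forall p, conv S f g p = 0) ->
    forall f, I f -> forall p, f p = 0.

End Quiver.

(* Main.v *)
Require Import Defs.
From HB Require Import structures.
From mathcomp Require Import all_boot all_order all_algebra.
From Stdlib Require Import Classical ClassicalEpsilon.
Set Implicit Arguments. Unset Strict Implicit. Unset Printing Implicit Defensive.
Import GRing.Theory.
Local Open Scope ring_scope.

Section Aux.
Variables (V A : Type) (s t : A -> V) (k : fieldType).

Lemma end_from_cat v l1 l2 :
  end_from t v (l1 ++ l2) = end_from t (end_from t v l1) l2.
Proof. by elim: l1 v => [|a l IH] v //=. Qed.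

Lemma valid_from_cat v l1 l2 :
  valid_from s t v (l1 ++ l2) -> valid_from s t (end_from t v l1) l2.
Proof. elim: l1 v => [|a l IH] v //= [_ H]; exact: IH. Qed.

Lemma conv_nz (S : pred (qpath V A)) (f g : qpath V A -> k) q :
  conv t S f g q <> 0 -> S q /\ exists i : nat, (i <= size q.2)%N /\
    f (q.1, take i q.2) <> 0 /\ g (end_from t q.1 (take i q.2), drop i q.2) <> 0.
Proof.
rewrite /conv; case: (S q) => //= H; split => //.
apply: NNPP => Hn; apply: H; apply: big1 => i _.
case: (eqVneq (f (q.1, take i q.2)) 0) => [->|h1]; first by rewrite mul0r.
case: (eqVneq (g (end_from t q.1 (take i q.2), drop i q.2)) 0) => [->|h2];
  first by rewrite mulr0.
exfalso; apply: Hn; exists i; split; first by rewrite -ltnS ltn_ord.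
by split; apply/eqP.
Qed.

Lemma add_nz (x y : k) : x + y <> 0 -> x <> 0 \/ y <> 0.
Proof.
case: (eqVneq x 0) => [->|h]; last by left; apply/eqP.
by rewrite add0r; right.
Qed.

Definition pstar (p : qpath V A) : qpath V A -> k :=
  fun q => if excluded_middle_informative (q = p) then 1 else 0.

Lemma not_sp (S : pred (qpath V A)) (I : (qpath V A -> k) -> Prop) p :
  dual_ideal t S I -> (forall f g, I f -> I g -> forall q, conv t S f g q = 0) ->
  I (pstar p) -> ~ semiprime_coalgebra t k S.
Proof.
move=> HI H2 Hp Hs; have := Hs I HI H2 _ Hp p.
rewrite /pstar; case: excluded_middle_informative => // _ /eqP.
by rewrite oner_eq0.
Qed.

Variable S : pred (qpath V A).
Hypothesis HS : monomial_admissible_subcoalgebra s t S.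

Section Right.
Variable p : qpath V A.
Hypothesis Hp : S p.
Hypothesis Hlen : (0 < plength p)%N.
Hypothesis Hr : forall b : A, s b = pend t p -> ~ S (path_arrow p b).

Lemma keyR q l1 b r : S q -> q.2 = l1 ++ p.2 ++ b :: r ->
  end_from t q.1 l1 = p.1 -> False.
Proof.
case: HS => Hval Hsplit _ _.
case: q => v lq /= Sq Eq Ee; subst lq.
have [_ S1] := Hsplit _ _ _ Sq; rewrite Ee in S1.
rewrite -cat1s catA in S1.
have [S2 _] := Hsplit _ _ _ S1.
have V2 := Hval _ S2; rewrite /valid_path /= in V2.
have := valid_from_cat V2 => /= [[Hb _]].
apply: (Hr (b := b)); first by rewrite Hb.
by rewrite /path_arrow -cats1; move: S2; case: (p) => ? ?.
Qed.

Definition IR (f : qpath V A -> k) : Prop :=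
  dual_elt S f /\ forall q, f q <> 0 ->
    exists l, q.2 = l ++ p.2 /\ end_from t q.1 l = p.1.

Lemma IR_ideal : dual_ideal t S IR.
Proof.
split.
- by move=> f [].
- by split => // q.
- move=> f g [Hf Ff] [Hg Fg]; split.
    by move=> q Hq; rewrite /dual_add Hf // Hg // addr0.
  by move=> q /add_nz [/Ff|/Fg].
- move=> f g [Hf Ff] Hg; split.
    by move=> q Hq; rewrite /conv (negbTE (introN idP Hq)).
  move=> q /conv_nz [Sq [i [Hi [_ /Ff [l [El Ee]]]]]]; simpl in *.
  exists (take i q.2 ++ l); split.
    by rewrite -catA -El cat_take_drop.
  by rewrite end_from_cat.
- move=> f g [Hf Ff] Hg; split.
    by move=> q Hq; rewrite /conv (negbTE (introN idP Hq)).
  move=> q /conv_nz [Sq [i [Hi [/Ff [l [El Ee]] _]]]]; simpl in *.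
  case Ed: (drop i q.2) => [|b r].
    by exists l; rewrite -(cat_take_drop i q.2) Ed cats0 El.
  exfalso; apply: (keyR (l1 := l) (b := b) (r := r) Sq) => //.
  by rewrite -(cat_take_drop i q.2) Ed El /= catA.
Qed.

Lemma IR_sq f g : IR f -> IR g -> forall q, conv t S f g q = 0.
Proof.
move=> [Hf Ff] [Hg Fg] q; apply: NNPP => /conv_nz.
move=> [Sq [i [Hi [/Ff [l [El Ee]] /Fg [l2 [El2 _]]]]]]; simpl in *.
case Ed: (drop i q.2) => [|b r].
  move: El2; rewrite Ed => /(congr1 size); rewrite size_cat /=.
  by move: Hlen; rewrite /plength; case: (size p.2) => // n _; rewrite addnS.
apply: (keyR (l1 := l) (b := b) (r := r) Sq) => //.
by rewrite -(cat_take_drop i q.2) Ed El /= catA.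
Qed.

Lemma IR_pstar : IR (pstar p).
Proof.
split.
  by move=> q Hq; rewrite /pstar; case: excluded_middle_informative => // E; subst.
move=> q; rewrite /pstar; case: excluded_middle_informative => // E _; subst q.
by exists [::].
Qed.

Lemma right_case : ~ semiprime_coalgebra t k S.
Proof. exact: (not_sp IR_ideal IR_sq IR_pstar). Qed.
End Right.

Section Left.
Variable p : qpath V A.
Hypothesis Hp : S p.
Hypothesis Hlen : (0 < plength p)%N.
Hypothesis Hl : forall b : A, t b = pstart p -> ~ S (arrow_path s b p).

Lemma keyL q r b l : S q -> q.2 = r ++ b :: (p.2 ++ l) ->
  end_from t q.1 (rcons r b) = p.1 -> False.
Proof.
case: HS => Hval Hsplit _ _.
case: q => v lq /= Sq Eq Ee; subst lq.
have [_ S1] := Hsplit _ _ _ Sq.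
rewrite -cat_cons in S1.
have [S2 _] := Hsplit _ _ _ S1.
have V2 := Hval _ S2; rewrite /valid_path /= in V2.
case: V2 => Hb _.
apply: (Hl (b := b)).
  by rewrite -cats1 end_from_cat /= in Ee.
by rewrite /arrow_path Hb.
Qed.

Definition IL (f : qpath V A -> k) : Prop :=
  dual_elt S f /\ forall q, f q <> 0 -> q.1 = p.1 /\ exists l, q.2 = p.2 ++ l.

Lemma takeL q i l : S q -> take i q.2 <> [::] -> drop i q.2 = p.2 ++ l ->
  end_from t q.1 (take i q.2) = p.1 -> False.
Proof.
move=> Sq; case Et: (take i q.2) => [|b0 r0] // _ Ed Ee.
move: Ee; rewrite lastI => Ee.
apply: (keyL (r := belast b0 r0) (b := last b0 r0) (l := l) Sq) => //.
by rewrite -(cat_take_drop i q.2) Et Ed lastI cat_rcons.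
Qed.

Lemma IL_ideal : dual_ideal t S IL.
Proof.
split.
- by move=> f [].
- by split => // q.
- move=> f g [Hf Ff] [Hg Fg]; split.
    by move=> q Hq; rewrite /dual_add Hf // Hg // addr0.
  by move=> q /add_nz [/Ff|/Fg].
- move=> f g [Hf Ff] Hg; split.
    by move=> q Hq; rewrite /conv (negbTE (introN idP Hq)).
  move=> q /conv_nz [Sq [i [Hi [_ /Ff [/= Ee [l El]]]]]]; simpl in *.
  case Et: (take i q.2) => [|b0 r0].
    rewrite Et /= in Ee; split => //; exists l.
    by rewrite -(cat_take_drop i q.2) Et.
  exfalso; apply: (takeL Sq _ El Ee); by rewrite Et.
- move=> f g [Hf Ff] Hg; split.
    by move=> q Hq; rewrite /conv (negbTE (introN idP Hq)).
  move=> q /conv_nz [Sq [i [Hi [/Ff [/= Ee [l El]] _]]]]; simpl in *.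
  split => //; exists (l ++ drop i q.2).
  by rewrite catA -El cat_take_drop.
Qed.

Lemma IL_sq f g : IL f -> IL g -> forall q, conv t S f g q = 0.
Proof.
move=> [Hf Ff] [Hg Fg] q; apply: NNPP => /conv_nz.
move=> [Sq [i [Hi [/Ff [_ [l El]] /Fg [/= Ee [l2 El2]]]]]]; simpl in *.
apply: (takeL Sq _ El2 Ee); rewrite El.
by move: Hlen; rewrite /plength; case: (p.2).
Qed.

Lemma IL_pstar : IL (pstar p).
Proof.
split.
  by move=> q Hq; rewrite /pstar; case: excluded_middle_informative => // E; subst.
move=> q; rewrite /pstar; case: excluded_middle_informative => // E _; subst q.
by split => //; exists [::]; rewrite cats0.
Qed.

Lemma left_case : ~ semiprime_coalgebra t k S.
Proof. exact: (not_sp IL_ideal IL_sq IL_pstar). Qed.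
End Left.
End Aux.

Theorem mainTheorem20 (V A : Type) (s t : A -> V) (k : fieldType)
    (S : pred (qpath V A)) :
  monomial_admissible_subcoalgebra s t S ->
  ((exists p : qpath V A, S p /\ (0 < plength p)%N /\
       ((forall b : A, s b = pend t p -> ~ S (path_arrow p b)) \/
        (forall b : A, t b = pstart p -> ~ S (arrow_path s b p)))) ->
     ~ semiprime_coalgebra t k S)
  /\
  ((exists a : A,
       (forall b : A, t b = s a -> ~ S (arrow_path s b (arrow_as_path s a))) \/
       (forall b : A, s b = t a -> ~ S (path_arrow (arrow_as_path s a) b))) ->
     ~ semiprime_coalgebra t k S).
Proof.
move=> HS.
have H1 : (exists p : qpath V A, S p /\ (0 < plength p)%N /\
       ((forall b : A, s b = pend t p -> ~ S (path_arrow p b)) \/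
        (forall b : A, t b = pstart p -> ~ S (arrow_path s b p)))) ->
     ~ semiprime_coalgebra t k S.
  move=> [p [Sp [Hlen [Hr|Hl]]]].
    exact: (right_case HS Sp Hlen Hr).
  exact: (left_case HS Sp Hlen Hl).
split => //.
move=> [a Ha]; apply: H1; exists (arrow_as_path s a).
case: HS => _ _ _ Har.
split; first exact: Har.
split; first by [].
by case: Ha => H; [right|left].
Qed.
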